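(* Let $A$ be a unital algebra over a field $F$ with $\operatorname{char}(F)\neq2$ and $\mathcal{A}=M_n(A)$, $n\ge2$. Then $\operatorname{QJDer}(\mathcal{A})=\operatorname{Cent}(\mathcal{A})+\operatorname{Der}(\mathcal{A})$.
   Context: $x\circ y=xy+yx$. $\operatorname{QJDer}(\mathcal{A})$: linear $f:\mathcal{A}\to\mathcal{A}$ for which there is a linear $h$ with $f(x)\circ y+x\circ f(y)=h(x\circ y)$ for all $x,y$. $\operatorname{Cent}(\mathcal{A})$: linear $f$ with $f(xy)=f(x)y=xf(y)$. $\operatorname{Der}(\mathcal{A})$: linear $d$ with $d(xy)=d(x)y+xd(y)$. Sums of sets of maps are sets of pointwise sums. *)

(* Defs.v *)
From HB Require Import structures.
From mathcomp Require Import all_boot all_order all_algebra.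
Set Implicit Arguments. Unset Strict Implicit. Unset Printing Implicit Defensive.
Import GRing.Theory.
Local Open Scope ring_scope.

Section Defs.
Variables (F : fieldType) (A : algType F) (n : nat).
Notation MA := 'M[A]_n.

Definition mxscale (a : F) (X : MA) : MA := map_mx (fun y => a *: y) X.

Definition Flinear (f : MA -> MA) : Prop :=
  (forall x y, f (x + y) = f x + f y) /\
  (forall (a : F) x, f (mxscale a x) = mxscale a (f x)).

Definition jprod (x y : MA) : MA := x *m y + y *m x.

Definition isQJDer (f : MA -> MA) : Prop :=
  Flinear f /\ exists h : MA -> MA, Flinear h /\
    forall x y, jprod (f x) y + jprod x (f y) = h (jprod x y).

Definition isCent (f : MA -> MA) : Prop :=
  Flinear f /\ forall x y, f (x *m y) = f x *m y /\ f (x *m y) = x *m f y.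

Definition isDer (d : MA -> MA) : Prop :=
  Flinear d /\ forall x y, d (x *m y) = d x *m y + x *m d y.

End Defs.

(* Main.v *)
Require Import Defs.
From HB Require Import structures.
From mathcomp Require Import all_boot all_order all_algebra.
Set Implicit Arguments. Unset Strict Implicit. Unset Printing Implicit Defensive.
Import GRing.Theory.
Local Open Scope ring_scope.

Section Aux.
Variables (F : fieldType) (A : algType F) (n : nat).
Hypothesis hF : (2 \notin [pchar F])%N.
Notation MA := 'M[A]_n.

Lemma two_neq0 : (2%:R : F) != 0.
Proof. by move: hF; rewrite inE /=. Qed.

Lemma tfA (a b : A) : a + a = b + b -> a = b.
Proof.
move=> h.
have: (2%:R : F) *: a = (2%:R : F) *: b by rewrite !scaler_nat !mulr2n.
move=> /(congr1 (fun v => (2%:R : F)^-1 *: v)).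
by rewrite !scalerA mulVf ?two_neq0 // !scale1r.
Qed.

Lemma tfM (X Y : MA) : X + X = Y + Y -> X = Y.
Proof.
move=> h; apply/matrixP => p q; apply: tfA.
by move/matrixP: h => /(_ p q); rewrite !mxE.
Qed.

Definition E (i j : 'I_n) (a : A) : MA :=
  \matrix_(p, q) if (p == i) && (q == j) then a else 0.

Lemma EE i j a p q : E i j a p q = if (p == i) && (q == j) then a else 0.
Proof. by rewrite mxE. Qed.

Lemma mulEl i j a (X : MA) p q :
  (E i j a *m X) p q = if p == i then a * X j q else 0.
Proof.
rewrite !mxE (bigD1 j) //= big1 => [|k kj]; rewrite mxE ?eqxx.
  by case: (p == i); rewrite /= ?mul0r ?addr0 ?andbT.
by rewrite (negbTE kj) andbF mul0r.
Qed.

Lemma mulEr i j a (X : MA) p q :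
  (X *m E i j a) p q = if q == j then X p i * a else 0.
Proof.
rewrite !mxE (bigD1 i) //= big1 => [|k ki]; rewrite mxE ?eqxx.
  by case: (q == j); rewrite /= ?mulr0 ?addr0.
by rewrite (negbTE ki) /= mulr0.
Qed.

Lemma mulEE i j k l a b :
  E i j a *m E k l b = if j == k then E i l (a * b) else 0.
Proof.
apply/matrixP => p q; rewrite mulEl !EE.
have [_|jk] := eqVneq j k; rewrite ?EE ?mxE.
  by rewrite /=; case: (p == i); case: (q == l); rewrite /= ?mulr0.
by rewrite /= mulr0; case: (p == i).
Qed.

Lemma EDr i j a b : E i j (a + b) = E i j a + E i j b.
Proof. by apply/matrixP => p q; rewrite !mxE; case: ifP; rewrite ?addr0. Qed.

Lemma E0 i j : E i j 0 = 0.
Proof. by apply/matrixP => p q; rewrite !mxE; case: ifP. Qed.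

Lemma other (i : 'I_n) : (2 <= n)%N -> exists j : 'I_n, j != i.
Proof.
move=> hn.
have h0 : (0 < n)%N by apply: leq_trans hn.
have h1 : (1 < n)%N by [].
case: (i =P Ordinal h0) => [->|hi]; first by exists (Ordinal h1).
by exists (Ordinal h0); apply/eqP => e; apply: hi.
Qed.


Lemma addE (X Y : MA) p q : (X + Y) p q = X p q + Y p q.
Proof. by rewrite mxE. Qed.

Lemma subE (X Y : MA) p q : (X - Y) p q = X p q - Y p q.
Proof. by rewrite !mxE. Qed.

Lemma zeroE p q : (0 : MA) p q = 0.
Proof. by rewrite mxE. Qed.

Lemma jprodE (X Y : MA) p q : jprod X Y p q = (X *m Y) p q + (Y *m X) p q.
Proof. by rewrite /jprod addE. Qed.

Lemma sumE (G : 'I_n -> 'I_n -> A) p q :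
  (\sum_(i < n) \sum_(j < n) E i j (G i j)) p q = G p q.
Proof.
rewrite summxE (bigD1 p) //= summxE (bigD1 q) //= EE !eqxx /=.
rewrite big1 => [|j jq]; last by rewrite EE eqxx /= eq_sym (negbTE jq).
rewrite big1 => [|i ip]; first by rewrite !addr0.
by rewrite summxE big1 // => j _; rewrite EE eq_sym (negbTE ip).
Qed.

Lemma mx_decomp (x : MA) : x = \sum_(i < n) \sum_(j < n) E i j (x i j).
Proof. by apply/matrixP => p q; rewrite sumE. Qed.

Lemma jz (X : MA) k : jprod X (E k k 1) = 0 ->
  (forall q, X k q = 0) /\ (forall p, X p k = 0).
Proof.
move/matrixP => h.
have e p q : (if q == k then X p k else 0) + (if p == k then X k q else 0) = 0.
  by move: (h p q); rewrite jprodE mulEl mulEr mulr1 mul1r mxE.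
have kk : X k k = 0 by apply: tfA; move: (e k k); rewrite eqxx addr0.
split => [q|p].
  by case: (eqVneq q k) => [->//|qk]; move: (e k q); rewrite eqxx (negbTE qk) add0r.
by case: (eqVneq p k) => [->//|pk]; move: (e p k); rewrite eqxx (negbTE pk) addr0.
Qed.

Lemma jfix (X : MA) k : X = jprod (E k k 1) X ->
  X k k = 0 /\ (forall p q, p != k -> q != k -> X p q = 0).
Proof.
move/matrixP => h.
have e p q : X p q = (if p == k then X k q else 0) + (if q == k then X p k else 0).
  by move: (h p q); rewrite jprodE mulEl mulEr mulr1 mul1r.
split.
  have: X k k + 0 = X k k + X k k by rewrite addr0 {1}(e k k) eqxx.
  by move/addrI => <-.
by move=> p q pk qk; rewrite e (negbTE pk) (negbTE qk) addr0.
Qed.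

Section JD.
Variable D : MA -> MA.
Hypothesis Dadd : forall x y, D (x + y) = D x + D y.
Hypothesis DJ : forall x y, D (jprod x y) = jprod (D x) y + jprod x (D y).
Hypothesis De : forall k, D (E k k 1) = 0.
Hypothesis hn : (2 <= n)%N.

Lemma D0 : D 0 = 0.
Proof.
have h := Dadd 0 0; rewrite addr0 in h.
by apply: (addrI (D 0)); rewrite addr0 -h.
Qed.

Lemma jprod0l (x : MA) : jprod 0 x = 0.
Proof. by rewrite /jprod mulmx0 mul0mx addr0. Qed.
Lemma jprod0r (x : MA) : jprod x 0 = 0.
Proof. by rewrite /jprod mulmx0 mul0mx addr0. Qed.

Lemma diagD i a p q : ~~ ((p == i) && (q == i)) -> D (E i i a) p q = 0.
Proof.
move=> h.
have jk k : k != i -> jprod (D (E i i a)) (E k k 1) = 0.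
  move=> ki.
  have: jprod (E i i a) (E k k 1) = 0.
    by rewrite /jprod !mulEE eq_sym (negbTE ki) addr0.
  by move/(congr1 D); rewrite DJ De jprod0r addr0 D0.
case: (eqVneq p i) => [pi|pi].
  have qi : q != i by move: h; rewrite pi eqxx.
  exact: ((jz (jk q qi)).2 p).
exact: ((jz (jk p pi)).1 q).
Qed.

Lemma fixD i j a : i != j -> D (E i j a) = jprod (E i i 1) (D (E i j a)) /\
                   D (E i j a) = jprod (E j j 1) (D (E i j a)).
Proof.
move=> ij; split.
  have: jprod (E i i 1) (E i j a) = E i j a.
    by rewrite /jprod !mulEE eqxx mul1r eq_sym (negbTE ij) addr0.
  by move=> h; rewrite -{1}h DJ De jprod0l add0r.
have: jprod (E j j 1) (E i j a) = E i j a.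
  by rewrite /jprod !mulEE eqxx mulr1 eq_sym (negbTE ij) add0r.
by move=> h; rewrite -{1}h DJ De jprod0l add0r.
Qed.

Lemma offji1 i j : i != j -> D (E i j 1) j i = 0.
Proof.
move=> ij.
have: jprod (E i j 1) (E i j 1) = 0 by rewrite /jprod !mulEE eq_sym (negbTE ij) addr0.
move/(congr1 D); rewrite DJ D0 => /matrixP /(_ i i).
rewrite !addE ?jprodE !mulEl !mulEr eqxx (negbTE ij) !mul1r !add0r !addr0 mxE => h.
by apply: tfA; rewrite h addr0.
Qed.

Lemma offji i j a : i != j -> D (E i j a) j i = 0.
Proof.
move=> ij.
have: jprod (E i i a) (E i j 1) = E i j a.
  by rewrite /jprod !mulEE eqxx mulr1 eq_sym (negbTE ij) addr0.
have ji : j != i by rewrite eq_sym.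
move=> h; rewrite -h DJ !addE ?jprodE !mulEl !mulEr eqxx.
by rewrite (negbTE ij) (negbTE ji) (offji1 ij) mul0r ?addr0 ?add0r ?mulr0 ?mul0r.
Qed.

Lemma offD i j a p q : i != j -> ~~ ((p == i) && (q == j)) -> D (E i j a) p q = 0.
Proof.
move=> ij h.
have [ii ri] := jfix (fixD a ij).1.
have [jj rj] := jfix (fixD a ij).2.
case: (eqVneq p i) => [ep|pi].
  have qj : q != j by move: h; rewrite ep eqxx.
  case: (eqVneq q i) => [eq|qi]; first by rewrite ep eq.
  by apply: rj => //; rewrite ep.
case: (eqVneq q i) => [eq|qi]; last by apply: ri.
case: (eqVneq p j) => [pj|pj]; first by rewrite pj eq offji.
by apply: rj; rewrite // eq.
Qed.

Definition phi i j a := D (E i j a) i j.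

Lemma DE i j a : D (E i j a) = E i j (phi i j a).
Proof.
apply/matrixP => p q; rewrite EE.
case: ifP => [/andP[/eqP-> /eqP->] //|h].
case: (eqVneq i j) => [eij|ij].
  by rewrite -eij in h *; rewrite diagD // h.
by rewrite offD // h.
Qed.


Lemma key1 p q r a b : p != q -> phi p q (a * b) = phi p r a * b + a * phi r q b.
Proof.
move=> pq.
have qp : q != p by rewrite eq_sym.
have: jprod (E p r a) (E r q b) = E p q (a * b).
  by rewrite /jprod !mulEE eqxx (negbTE qp) addr0.
move=> h; rewrite /phi -h DJ !DE /jprod !mulEE eqxx (negbTE qp) !addr0.
by rewrite addE !EE !eqxx.
Qed.

Lemma key2 p r a b : r != p -> phi p p (a * b) = phi p r a * b + a * phi r p b.
Proof.
move=> rp.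
have pr : p != r by rewrite eq_sym.
have: jprod (E p r a) (E r p b) = E p p (a * b) + E r r (b * a).
  by rewrite /jprod !mulEE !eqxx.
move/(congr1 D); rewrite Dadd DJ !DE /jprod !mulEE !eqxx => /matrixP /(_ p p).
rewrite !addE !EE eqxx (negbTE pr) /= !addr0 => <-.
by rewrite /phi DE EE eqxx.
Qed.

Lemma key p q r a b : phi p q (a * b) = phi p r a * b + a * phi r q b.
Proof.
case: (eqVneq p q) => [<-|pq]; last exact: key1.
case: (eqVneq r p) => [->|rp]; last exact: key2.
have [m mp] := other p hn.
have pm : p != m by rewrite eq_sym.
rewrite -[a * b]mulr1 (key2 (a * b) 1 mp) mulr1 (key1 p a b pm).
have -> : phi p p b = phi p m b + b * phi m p 1 by rewrite -{1}[b]mulr1 (key2 b 1 mp) mulr1.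
by rewrite mulrDr -!mulrA addrA.
Qed.

Lemma Dsum (I : Type) (r : seq I) (P : pred I) (G : I -> MA) :
  D (\sum_(i <- r | P i) G i) = \sum_(i <- r | P i) D (G i).
Proof. exact: (big_morph D Dadd D0). Qed.

Lemma Dentry (x : MA) p q : D x p q = phi p q (x p q).
Proof.
rewrite {1}(mx_decomp x) Dsum.
under eq_bigr do rewrite Dsum.
under eq_bigr do under eq_bigr do rewrite DE.
by rewrite sumE.
Qed.

Lemma phiD p q a b : phi p q (a + b) = phi p q a + phi p q b.
Proof. by rewrite /phi EDr Dadd addE. Qed.

Lemma phi0 p q : phi p q 0 = 0.
Proof. by rewrite /phi E0 D0 mxE. Qed.

Lemma phisum p q (I : Type) (r : seq I) (P : pred I) (G : I -> A) :
  phi p q (\sum_(i <- r | P i) G i) = \sum_(i <- r | P i) phi p q (G i).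
Proof. exact: (big_morph (phi p q) (phiD p q) (phi0 p q)). Qed.

Lemma JD_der x y : D (x *m y) = D x *m y + x *m D y.
Proof.
apply/matrixP => p q; rewrite Dentry addE !mxE -big_split phisum.
by apply: eq_bigr => r _; rewrite !Dentry (key p q r).
Qed.

End JD.

Lemma subACA (a b c d : MA) : (a - b) + (c - d) = (a + c) - (b + d).
Proof. by rewrite opprD addrACA. Qed.

Lemma auxPQ (P Q : MA) : P - Q = P + Q - (Q + Q).
Proof. by rewrite opprD addrA addrK. Qed.

Lemma jprodBl (a b y : MA) : jprod (a - b) y = jprod a y - jprod b y.
Proof. by rewrite /jprod mulmxBl mulmxBr subACA. Qed.
Lemma jprodBr (a b y : MA) : jprod y (a - b) = jprod y a - jprod y b.
Proof. by rewrite /jprod mulmxBl mulmxBr subACA. Qed.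
Lemma jprodDl (a b y : MA) : jprod (a + b) y = jprod a y + jprod b y.
Proof. by rewrite /jprod mulmxDl mulmxDr addrACA. Qed.
Lemma jprodDr (a b y : MA) : jprod y (a + b) = jprod y a + jprod y b.
Proof. by rewrite /jprod mulmxDl mulmxDr addrACA. Qed.

Lemma der_jordan (G : MA -> MA) :
  (forall x y, G (x + y) = G x + G y) ->
  (forall x y, G (x *m y) = G x *m y + x *m G y) ->
  forall x y, G (jprod x y) = jprod (G x) y + jprod x (G y).
Proof.
move=> Gadd Gd x y; rewrite /jprod Gadd !Gd.
by rewrite [G y *m x + _]addrC addrACA.
Qed.

Lemma jordan_der (d : MA -> MA) : (2 <= n)%N ->
  (forall x y, d (x + y) = d x + d y) ->
  (forall x y, d (jprod x y) = jprod (d x) y + jprod x (d y)) ->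
  forall x y, d (x *m y) = d x *m y + x *m d y.
Proof.
move=> hn dadd dJ.
have d0 := D0 dadd.
set w : MA := \matrix_(p, q) d (E q q 1) p q.
pose ad (x : MA) := w *m x - x *m w.
pose D x := d x - ad x.
have adadd x y : ad (x + y) = ad x + ad y by rewrite /ad mulmxDr mulmxDl subACA.
have add x y : ad (x *m y) = ad x *m y + x *m ad y.
  by rewrite /ad mulmxBl mulmxBr !mulmxA addrA subrK.
have adJ := der_jordan adadd add.
have Dadd x y : D (x + y) = D x + D y by rewrite /D dadd adadd [RHS]subACA.
have DJ x y : D (jprod x y) = jprod (D x) y + jprod x (D y).
  by rewrite /D dJ adJ [jprod (d x - _) _]jprodBl [jprod x (d y - _)]jprodBr [RHS]subACA.
have fe k : d (E k k 1) = jprod (E k k 1) (d (E k k 1)).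
  apply: tfM.
  have: jprod (E k k 1) (E k k 1) = E k k 1 + E k k 1 by rewrite /jprod mulEE eqxx mulr1.
  move/(congr1 d); rewrite dJ dadd => <-.
  by rewrite /jprod [d (E k k 1) *m E k k 1 + _]addrC.
have fc k q : q != k -> d (E k k 1) k q + d (E q q 1) k q = 0.
  move=> qk.
  have kq : k != q by rewrite eq_sym.
  have: jprod (E k k 1) (E q q 1) = 0 by rewrite /jprod !mulEE (negbTE kq) (negbTE qk) addr0.
  move/(congr1 d); rewrite dJ d0 => /matrixP /(_ k q).
  rewrite !addE !mulEl !mulEr !eqxx (negbTE kq) (negbTE qk) mxE.
  by rewrite mulr1 mul1r !addr0.
have De k : D (E k k 1) = 0.
  have [kk ok] := jfix (fe k).
  apply/matrixP => p q; rewrite /D /ad !subE zeroE mulEl mulEr /w !mxE mulr1 mul1r.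
  case: (eqVneq q k) => [->|qk]; case: (eqVneq p k) => [->|pk].
  - by rewrite kk subrr oppr0 addr0.
  - by rewrite subr0 subrr.
  - rewrite sub0r opprK; exact: fc.
  - by rewrite ok // subrr oppr0 addr0.
move=> x y.
have dD z : d z = D z + ad z by rewrite /D subrK.
clearbody D ad.
by rewrite {1}dD (JD_der Dadd DJ De hn) add (dD x) (dD y) mulmxDl mulmxDr addrACA.
Qed.


Section QJ.
Variables f h : MA -> MA.
Hypothesis fadd : forall x y, f (x + y) = f x + f y.
Hypothesis hadd : forall x y, h (x + y) = h x + h y.
Hypothesis Q : forall x y, jprod (f x) y + jprod x (f y) = h (jprod x y).
Notation c := (f 1%:M).

Lemma Q1 z : h z + h z = f z + f z + (z *m c + c *m z).
Proof. by have := Q z 1%:M; rewrite /jprod !mulmx1 !mul1mx hadd => <-. Qed.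

Lemma Qe i : jprod (f (E i i 1)) (E i i 1) + jprod (E i i 1) (f (E i i 1)) =
   f (E i i 1) + f (E i i 1) + (E i i 1 *m c + c *m E i i 1).
Proof.
rewrite Q -Q1.
have ->: jprod (E i i 1) (E i i 1) = E i i 1 + E i i 1 by rewrite /jprod mulEE eqxx mulr1.
by rewrite hadd.
Qed.

Lemma c_off i q : q != i -> c i q = 0.
Proof.
move=> qi; move/matrixP: (Qe i) => /(_ i q).
rewrite !addE !mulEl !mulEr eqxx (negbTE qi) !mul1r !add0r !addr0 => h1.
have: f (E i i 1) i q + f (E i i 1) i q + 0 = f (E i i 1) i q + f (E i i 1) i q + c i q.
  by rewrite addr0 -h1.
by move/addrI.
Qed.

Lemma F_off i p q : p != i -> q != i -> f (E i i 1) p q = 0.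
Proof.
move=> pi qi; move/matrixP: (Qe i) => /(_ p q).
rewrite !addE !mulEl !mulEr (negbTE pi) (negbTE qi) !addr0 => h1.
by apply: tfA; rewrite -h1 addr0.
Qed.

Lemma F_ii i : f (E i i 1) i i = c i i.
Proof.
move/matrixP: (Qe i) => /(_ i i).
rewrite !addE !mulEl !mulEr eqxx !mul1r !mulr1 => /addrI.
exact: tfA.
Qed.

Lemma c_entry i j a : i != j -> c i i * a = a * c j j.
Proof.
move=> ij.
have ji : j != i by rewrite eq_sym.
have hx : jprod (E i j a) (E i i 1) = E i j a.
  by rewrite /jprod !mulEE eqxx (negbTE ji) mul1r add0r.
have := Q (E i j a) (E i i 1); rewrite hx => H.
have := Q1 (E i j a); rewrite -{1 2}H => /matrixP /(_ i j).
rewrite !addE !mulEl !mulEr eqxx (negbTE ji) (F_off ji ji) F_ii mulr0 !add0r mul1r.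
by rewrite eqxx addrACA => /addrI /addIr.
Qed.

Lemma c_diag p q : c p p = c q q.
Proof.
case: (eqVneq p q) => [->//|pq].
by have := c_entry 1 pq; rewrite mulr1 mul1r.
Qed.

Lemma c_comm (hn : (2 <= n)%N) (x : MA) : c *m x = x *m c.
Proof.
apply/matrixP => p q; rewrite !mxE (bigD1 p) //= [in RHS](bigD1 q) //=.
rewrite big1 => [|r rp]; last by rewrite c_off // mul0r.
rewrite [in RHS]big1 => [|r rq]; last by rewrite c_off ?mulr0 // eq_sym.
have [j jp] := other p hn.
have pj : p != j by rewrite eq_sym.
by rewrite !addr0 (c_entry (x p q) pj) (c_diag j q).
Qed.

End QJ.

Lemma mxscaleE a (X : MA) p q : mxscale a X p q = a *: X p q.
Proof. by rewrite mxE. Qed.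

Lemma mxscaleD a (X Y : MA) : mxscale a (X + Y) = mxscale a X + mxscale a Y.
Proof. by apply/matrixP => p q; rewrite !addE !mxscaleE addE scalerDr. Qed.

Lemma mxscaleB a (X Y : MA) : mxscale a (X - Y) = mxscale a X - mxscale a Y.
Proof. by apply/matrixP => p q; rewrite !subE !mxscaleE subE scalerBr. Qed.

Lemma mxscaleM a (X Y : MA) : mxscale a (X *m Y) = X *m mxscale a Y.
Proof.
apply/matrixP => p q; rewrite mxscaleE !mxE scaler_sumr.
by apply: eq_bigr => r _; rewrite mxscaleE scalerAr.
Qed.

End Aux.

Theorem corollary4p3 (F : fieldType) (A : algType F) (n : nat)
  (hF : (2 \notin [pchar F])%N) (hn : (2 <= n)%N) :
  forall f : 'M[A]_n -> 'M[A]_n,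
    isQJDer f <->
    exists g d : 'M[A]_n -> 'M[A]_n,
      isCent g /\ isDer d /\ forall x, f x = g x + d x.
Proof.
move=> f; split.
- case=> [[fadd fsc] [h [[hadd hsc] Q]]].
  have comm := c_comm hF hadd Q hn.
  have q1 := Q1 hadd Q.
  set c := f 1%:M in comm q1.
  have cj x y : jprod (c *m x) y + jprod x (c *m y) = c *m jprod x y + c *m jprod x y.
    rewrite /jprod !mulmxA -!comm -!mulmxA mulmxDr.
    done.
  have dadd x y : f (x + y) - c *m (x + y) = (f x - c *m x) + (f y - c *m y).
    by rewrite fadd mulmxDr [RHS]subACA.
  have dJ x y : f (jprod x y) - c *m jprod x y =
      jprod (f x - c *m x) y + jprod x (f y - c *m y).
    apply: (tfM hF).
    rewrite jprodBl jprodBr [X in _ = X + X]subACA Q cj [RHS]subACA q1 -comm.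
    rewrite [LHS]subACA. exact: (auxPQ (f (jprod x y) + f (jprod x y)) (c *m jprod x y + c *m jprod x y)).
  exists (fun x => c *m x), (fun x => f x - c *m x).
  split; [|split].
  + split; [split|].
    * by move=> x y; rewrite mulmxDr.
    * by move=> a x; rewrite mxscaleM.
    * move=> x y; split; first by rewrite mulmxA.
      by rewrite mulmxA comm -mulmxA.
  + split; first split.
    * exact: dadd.
    * by move=> a x; rewrite fsc -mxscaleM mxscaleB.
    * exact: (jordan_der hF hn dadd dJ).
  + by move=> x; rewrite addrC subrK.
- case=> g [d [[[gadd gsc] gc] [[[dadd dsc] dd] fgd]]].
  split.
    split => [x y|a x]; first by rewrite !fgd gadd dadd addrACA.
    by rewrite !fgd gsc dsc mxscaleD.
  exists (fun z => g z + g z + d z); split; first split.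
  + by move=> x y; rewrite gadd dadd [g x + g y + _]addrACA [LHS]addrACA.
  + by move=> a x; rewrite gsc dsc !mxscaleD.
  + move=> x y; rewrite !fgd jprodDl jprodDr addrACA -(der_jordan dadd dd x y).
    congr (_ + _); rewrite /jprod gadd.
    by rewrite -(gc x y).1 -(gc y x).2 -(gc x y).2 -(gc y x).1.
Qed.
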